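(* Let $X$ be a topological space, $(Y,d)$ a metric space and $f:X\to Y$ a mapping. Assume that for some integer $n\ge 2$ there are strictly functionally discrete families $\mathcal F_0,\mathcal F_1,\dots,\mathcal F_n$ of subsets of $X$ and mappings $p_k:\mathcal F_k\to Y$, $k\in\{0,\dots,n\}$, such that: (A) $\mathcal F_0$ consists of the single set $X$; (B) for every $k\le n$ and $F\in\mathcal F_k$, $\sup_{x\in F} d(f(x),p_k(F))<\frac{1}{2^{k+2}}$; (C) for every $k<n$ each set of $\mathcal F_{k+1}$ is contained in some set of $\mathcal F_k$; (D) for every $F\in\mathcal F_1$ the points $p_0(X)$ and $p_1(F)$ can be joined by an arc in $Y$; (E) for every $k\in\{1,\dots,n-1\}$ and all $F\in\mathcal F_{k+1}$, $F'\in\mathcal F_k$ with $F\subseteq F'$, the points $p_{k+1}(F)$ and $p_k(F')$ can be joined by an arc of diameter $<\frac{1}{2^{k+2}}$ in $Y$. Then there exists a continuous mapping $g:X\to Y$ such that $d(f(x),g(x))<\frac{1}{2^k}$ for every $k\in\{1,\dots,n\}$ and every $x\in\bigcup\mathcal F_k$.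
   Context: A family $\mathcal A$ of subsets of $X$ is strictly functionally discrete if for every $A\in\mathcal A$ there is a continuous $f_A:X\to[0,1]$ with $A\subseteq f_A^{-1}(0)$ such that the family $(f_A^{-1}([0,1)):A\in\mathcal A)$ is discrete (every point of $X$ has a neighborhood meeting at most one member). $\bigcup\mathcal F_k$ denotes the union of all members of $\mathcal F_k$. Points $a,b$ are joined by an arc in $Y$ if there is a continuous $\gamma:[0,1]\to Y$ with $\gamma(0)=a$, $\gamma(1)=b$; its diameter is that of $\gamma([0,1])$. *)

(* Defs.v *)
From Stdlib Require Import Reals.
Open Scope R_scope.

Definition is_topology {X : Type} (open : (X -> Prop) -> Prop) : Prop :=
  open (fun _ => True) /\
  open (fun _ => False) /\
  (forall U V, open U -> open V -> open (fun x => U x /\ V x)) /\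
  (forall (I : Type) (U : I -> X -> Prop),
      (forall i, open (U i)) -> open (fun x => exists i, U i x)).

Definition is_metric {Y : Type} (d : Y -> Y -> R) : Prop :=
  (forall x y, 0 <= d x y) /\
  (forall x y, d x y = 0 <-> x = y) /\
  (forall x y, d x y = d y x) /\
  (forall x y z, d x z <= d x y + d y z).

Definition metric_open {Y : Type} (d : Y -> Y -> R) (V : Y -> Prop) : Prop :=
  forall y, V y -> exists eps, 0 < eps /\ forall z, d y z < eps -> V z.

Definition continuous_top_metric {X Y : Type} (open : (X -> Prop) -> Prop)
  (d : Y -> Y -> R) (g : X -> Y) : Prop :=
  forall V, metric_open d V -> open (fun x => V (g x)).

Definition R_dist_fun (a b : R) : R := Rabs (a - b).

Definition strictly_functionally_discrete {X : Type} (open : (X -> Prop) -> Prop)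
  {I : Type} (F : I -> X -> Prop) : Prop :=
  exists h : I -> X -> R,
    (forall i, continuous_top_metric open R_dist_fun (h i)) /\
    (forall i x, 0 <= h i x <= 1) /\
    (forall i x, F i x -> h i x = 0) /\
    (* the family (h_i^{-1}([0,1)))_i is discrete *)
    (forall x, exists U, open U /\ U x /\
       forall i j, (exists y, U y /\ h i y < 1) ->
                   (exists y, U y /\ h j y < 1) -> i = j).

Definition path_on01 {Y : Type} (d : Y -> Y -> R) (gamma : R -> Y) : Prop :=
  forall t, 0 <= t <= 1 -> forall eps, 0 < eps -> exists delta, 0 < delta /\
    forall s, 0 <= s <= 1 -> Rabs (s - t) < delta -> d (gamma s) (gamma t) < eps.

Definition joined_by_arc {Y : Type} (d : Y -> Y -> R) (a b : Y) : Prop :=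
  exists gamma : R -> Y, path_on01 d gamma /\ gamma 0 = a /\ gamma 1 = b.

Definition joined_by_small_arc {Y : Type} (d : Y -> Y -> R) (a b : Y) (r : R) : Prop :=
  exists gamma : R -> Y, path_on01 d gamma /\ gamma 0 = a /\ gamma 1 = b /\
    exists r', r' < r /\
      forall s t, 0 <= s <= 1 -> 0 <= t <= 1 -> d (gamma s) (gamma t) <= r'.

(* Main.v *)
Require Import Defs.
From Stdlib Require Import Reals Arith Lia Lra Classical ClassicalEpsilon FunctionalExtensionality PropExtensionality.
Open Scope R_scope.

Lemma Rmin_lip a b a' b' : Rabs (Rmin a b - Rmin a' b') <= Rabs (a - a') + Rabs (b - b').
Proof. unfold Rmin; repeat destruct Rle_dec; unfold Rabs; repeat destruct Rcase_abs; lra. Qed.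

Definition psi (t : R) := Rmax 0 (2 * t - 1).
Definition tau (t : R) := Rmin 1 (2 * t).

Lemma psi_lip a b : Rabs (psi a - psi b) <= 2 * Rabs (a - b).
Proof. unfold psi, Rmax; repeat destruct Rle_dec; unfold Rabs; repeat destruct Rcase_abs; lra. Qed.
Lemma tau_lip a b : Rabs (tau a - tau b) <= 2 * Rabs (a - b).
Proof. unfold tau, Rmin; repeat destruct Rle_dec; unfold Rabs; repeat destruct Rcase_abs; lra. Qed.
Lemma onem_lip a b : Rabs ((1 - a) - (1 - b)) <= 2 * Rabs (a - b).
Proof. unfold Rabs; repeat destruct Rcase_abs; lra. Qed.

Section Gen.
Variable X : Type.
Variable open : (X -> Prop) -> Prop.
Hypothesis Htop : is_topology open.

Definition cont_at (h : X -> R) x := forall e, 0 < e -> exists U, open U /\ U x /\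
  forall y, U y -> Rabs (h y - h x) < e.

Lemma open_inter U V : open U -> open V -> open (fun x => U x /\ V x).
Proof. destruct Htop as [_ [_ [H _]]]. auto. Qed.

Lemma cont_pre h x : continuous_top_metric open R_dist_fun h -> cont_at h x.
Proof.
  intros Hc e He. exists (fun y => Rabs (h y - h x) < e). split; [|split].
  - apply (Hc (fun r => Rabs (r - h x) < e)). intros r Hr.
    exists (e - Rabs (r - h x)). split; [lra|]. intros z Hz. unfold R_dist_fun in Hz.
    unfold Rabs in *; repeat destruct Rcase_abs; lra.
  - simpl. replace (h x - h x) with 0 by ring. rewrite Rabs_R0; lra.
  - auto.
Qed.

Lemma cont_const c x : cont_at (fun _ => c) x.
Proof. intros e He. exists (fun _ => True). destruct Htop as [H _]. split; auto. split; auto.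
  intros. replace (c - c) with 0 by ring. rewrite Rabs_R0; lra. Qed.

Lemma cont_min h1 h2 x : cont_at h1 x -> cont_at h2 x -> cont_at (fun y => Rmin (h1 y) (h2 y)) x.
Proof.
  intros H1 H2 e He. destruct (H1 (e/2)) as [U1 [O1 [X1 P1]]]; [lra|].
  destruct (H2 (e/2)) as [U2 [O2 [X2 P2]]]; [lra|].
  exists (fun y => U1 y /\ U2 y). split; [apply open_inter; auto|]. split; [auto|].
  intros y [Y1 Y2]. pose proof (Rmin_lip (h1 y) (h2 y) (h1 x) (h2 x)).
  specialize (P1 y Y1); specialize (P2 y Y2). lra.
Qed.

Lemma cont_lip (phi : R -> R) h x : cont_at h x ->
  (forall a b, Rabs (phi a - phi b) <= 2 * Rabs (a - b)) -> cont_at (fun y => phi (h y)) x.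
Proof.
  intros H1 Hl e He. destruct (H1 (e/2)) as [U1 [O1 [X1 P1]]]; [lra|].
  exists U1. split; auto. split; auto. intros y Y1. specialize (Hl (h y) (h x)).
  specialize (P1 y Y1). lra.
Qed.

Variable Y : Type.
Variable d : Y -> Y -> R.
Hypothesis Hmet : is_metric d.

Definition contY (g : X -> Y) x := forall e, 0 < e -> exists U, open U /\ U x /\
  forall y, U y -> d (g x) (g y) < e.

Lemma contY_cont g : (forall x, contY g x) -> continuous_top_metric open d g.
Proof.
  intros Hg V HV.
  destruct Htop as [_ [_ [_ Hu]]].
  set (J := {U : X -> Prop | open U /\ forall y, U y -> V (g y)}).
  assert (E : (fun x => V (g x)) = (fun x => exists j : J, proj1_sig j x)).
  { apply functional_extensionality; intro x. apply propositional_extensionality. split.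
    - intro Hx. destruct (HV _ Hx) as [eps [Pe Pz]]. destruct (Hg x eps Pe) as [U [OU [Ux PU]]].
      exists (exist _ U (conj OU (fun y Uy => Pz _ (PU y Uy)))). exact Ux.
    - intros [[U [OU PU]] Ux]. exact (PU x Ux). }
  rewrite E. apply Hu. intros [U [OU PU]]. exact OU.
Qed.
End Gen.
Section Main.
Variable X : Type.
Variable open : (X -> Prop) -> Prop.
Hypothesis Htop : is_topology open.
Variable Y : Type.
Variable d : Y -> Y -> R.
Hypothesis Hmet : is_metric d.
Variable f : X -> Y.
Variable n : nat.
Variable I : nat -> Type.
Variable F : forall k, I k -> X -> Prop.
Variable p : forall k, I k -> Y.
Hypothesis Hdisc : forall k, (k <= n)%nat -> strictly_functionally_discrete open (F k).
Hypothesis HA : exists i0 : I 0%nat, (forall i, i = i0) /\ (forall x, F 0%nat i0 x).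
Hypothesis HC : forall k, (k < n)%nat -> forall i : I (S k),
      exists j : I k, forall x, F (S k) i x -> F k j x.
Hypothesis HD : forall (i0 : I 0%nat) (i : I 1%nat), joined_by_arc d (p 0%nat i0) (p 1%nat i).
Hypothesis HE : forall k, (1 <= k)%nat -> (k <= n - 1)%nat ->
      forall (i : I (S k)) (j : I k), (forall x, F (S k) i x -> F k j x) ->
      joined_by_small_arc d (p (S k) i) (p k j) (1 / 2 ^ (k + 2)%nat).

Definition hprops k (h : I k -> X -> R) : Prop :=
    (forall i, continuous_top_metric open R_dist_fun (h i)) /\
    (forall i x, 0 <= h i x <= 1) /\
    (forall i x, F k i x -> h i x = 0) /\
    (forall x, exists U, open U /\ U x /\
       forall i j, (exists y, U y /\ h i y < 1) ->
                   (exists y, U y /\ h j y < 1) -> i = j).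

Lemma hh_ex k : exists h : I k -> X -> R, (k <= n)%nat -> hprops k h.
Proof.
  destruct (le_lt_dec k n) as [l|l].
  - destruct (Hdisc k l) as [h Hh]. exists h. intros _. exact Hh.
  - exists (fun _ _ => 0). intros; lia.
Qed.
Definition hh k := proj1_sig (constructive_indefinite_description _ (hh_ex k)).
Lemma hh_spec k : (k <= n)%nat -> hprops k (hh k).
Proof. exact (proj2_sig (constructive_indefinite_description _ (hh_ex k))). Qed.

Lemma par_ex k (i : I (S k)) : exists o : option (I k), (k < n)%nat ->
  exists j, o = Some j /\ forall x, F (S k) i x -> F k j x.
Proof.
  destruct (lt_dec k n) as [l|l].
  - destruct (HC k l i) as [j Hj]. exists (Some j). intros _. exists j. auto.
  - exists None. intros; lia.
Qed.
Definition par k i := proj1_sig (constructive_indefinite_description _ (par_ex k i)).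
Lemma par_spec k i : (k < n)%nat ->
  exists j, par k i = Some j /\ forall x, F (S k) i x -> F k j x.
Proof. exact (proj2_sig (constructive_indefinite_description _ (par_ex k i))). Qed.

Definition i0 := proj1_sig (constructive_indefinite_description _ HA).
Lemma i0_spec : (forall i, i = i0) /\ (forall x, F 0%nat i0 x).
Proof. exact (proj2_sig (constructive_indefinite_description _ HA)). Qed.

Fixpoint a (k : nat) : I k -> X -> R :=
  match k return I k -> X -> R with
  | O => fun _ _ => 1
  | S k' => fun i x => match par k' i with
             | Some j => Rmin (1 - hh (S k') i x) (psi (a k' j x))
             | None => 0 end
  end.

Lemma a_S k i x : a (S k) i x = match par k i with
             | Some j => Rmin (1 - hh (S k) i x) (psi (a k j x))
             | None => 0 end.
Proof. reflexivity. Qed.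

Lemma a_range k : (k <= n)%nat -> forall i x, 0 <= a k i x <= 1.
Proof.
  induction k; intros Hk i x. simpl; lra.
  rewrite a_S. destruct (par k i) as [j|]; [|lra].
  destruct (hh_spec (S k) Hk) as [_ [Hr _]]. specialize (Hr i x).
  specialize (IHk ltac:(lia) j x). unfold psi, Rmin, Rmax; repeat destruct Rle_dec; lra.
Qed.

Lemma a_pos_h k i x : 0 < a (S k) i x -> hh (S k) i x < 1.
Proof.
  rewrite a_S. destruct (par k i) as [j|]; [|lra].
  unfold Rmin; destruct Rle_dec; unfold psi, Rmax in *; destruct Rle_dec; lra.
Qed.

Lemma a_pos_par k i x : 0 < a (S k) i x -> exists j, par k i = Some j /\ a k j x > 1/2.
Proof.
  rewrite a_S. destruct (par k i) as [j|]; [|lra]. intro H. exists j; split; auto.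
  unfold Rmin in H; destruct Rle_dec; unfold psi, Rmax in *; destruct Rle_dec; lra.
Qed.

Lemma a_one k : (k <= n)%nat -> forall i x, F k i x -> a k i x = 1.
Proof.
  induction k; intros Hk i x Hx. reflexivity.
  rewrite a_S. destruct (par_spec k i ltac:(lia)) as [j [Hj Hc]]. rewrite Hj.
  destruct (hh_spec (S k) Hk) as [_ [_ [H0 _]]]. rewrite (H0 i x Hx).
  rewrite (IHk ltac:(lia) j x (Hc x Hx)). unfold psi, Rmin, Rmax; repeat destruct Rle_dec; lra.
Qed.

Lemma a_cont k : (k <= n)%nat -> forall i x, cont_at _ open (a k i) x.
Proof.
  induction k; intros Hk i x. apply cont_const; exact Htop.
  destruct (par k i) as [j|] eqn:E.
  - assert (Heq : a (S k) i = fun y => Rmin (1 - hh (S k) i y) (psi (a k j y))).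
    { apply functional_extensionality; intro y. rewrite a_S, E. reflexivity. }
    rewrite Heq. apply cont_min; auto; try exact Htop.
    + apply (cont_lip _ open (fun t => 1 - t)); [|apply onem_lip].
      apply cont_pre. destruct (hh_spec (S k) Hk) as [Hc _]. apply Hc.
    + apply cont_lip; [|apply psi_lip]. apply IHk; lia.
  - assert (Heq : a (S k) i = fun y => 0).
    { apply functional_extensionality; intro y. rewrite a_S, E. reflexivity. }
    rewrite Heq. apply cont_const; exact Htop.
Qed.

Lemma a_unique k : (k <= n)%nat -> forall i i' x, 0 < a k i x -> 0 < a k i' x -> i = i'.
Proof.
  destruct k; intros Hk i i' x H1 H2.
  - destruct i0_spec as [Hu _]. rewrite (Hu i), (Hu i'). reflexivity.
  - destruct (hh_spec (S k) Hk) as [_ [_ [_ Hd]]]. destruct (Hd x) as [U [_ [Ux HU]]].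
    apply HU; exists x; split; auto; apply a_pos_h; auto.
Qed.

Lemma sel_ex k x : exists o : option (I k), (k <= n)%nat -> forall i, 0 < a k i x <-> o = Some i.
Proof.
  destruct (classic (exists i, 0 < a k i x)) as [[i Hi]|Hn].
  - exists (Some i). intros Hk i'. split.
    + intro H. f_equal. eapply a_unique; eauto.
    + intro H; injection H; intros; subst; auto.
  - exists None. intros Hk i'. split.
    + intro H; exfalso; apply Hn; eauto.
    + discriminate.
Qed.
Definition sel k x := proj1_sig (constructive_indefinite_description _ (sel_ex k x)).
Lemma sel_spec k x : (k <= n)%nat -> forall i, 0 < a k i x <-> sel k x = Some i.
Proof. exact (proj2_sig (constructive_indefinite_description _ (sel_ex k x))). Qed.

Definition arcP k (i : I (S k)) (gm : R -> Y) : Prop :=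
  forall j, par k i = Some j -> path_on01 d gm /\ gm 0 = p k j /\ gm 1 = p (S k) i /\
   ((1 <= k)%nat -> exists r', r' < 1 / 2 ^ (k + 2)%nat /\
      forall s t, 0 <= s <= 1 -> 0 <= t <= 1 -> d (gm s) (gm t) <= r').

Lemma gam_ex k (i : I (S k)) : exists gm : R -> Y, (k < n)%nat -> arcP k i gm.
Proof.
  destruct (lt_dec k n) as [l|l].
  - destruct (par_spec k i l) as [j0 [Hj0 Hc]]. destruct k as [|k].
    + destruct (HD j0 i) as [gm [Hp [H0 H1]]]. exists gm. intros _ j Hj.
      rewrite Hj0 in Hj. injection Hj; intro; subst.
      split; auto. split; auto. split; auto. intros; lia.
    + destruct (HE (S k) ltac:(lia) ltac:(lia) i j0 Hc) as [gm [Hp [H0 [H1 [r' [Hr Hd]]]]]].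
      exists (fun t => gm (1 - t)). intros _ j Hj.
      rewrite Hj0 in Hj. injection Hj; intro; subst.
      split; [|split; [|split]].
      * intros t Ht eps He. destruct (Hp (1 - t) ltac:(lra) eps He) as [del [Hdel Hs]].
        exists del; split; auto. intros s Hs' Hst. apply Hs. lra.
        replace (1 - s - (1 - t)) with (- (s - t)) by ring. rewrite Rabs_Ropp; auto.
      * simpl. replace (1 - 0) with 1 by ring. auto.
      * simpl. replace (1 - 1) with 0 by ring. auto.
      * intros _. exists r'. split; auto. intros s t Hs Ht. apply Hd; lra.
  - exists (fun _ => p (S k) i). intros; lia.
Qed.
Definition gam k i := proj1_sig (constructive_indefinite_description _ (gam_ex k i)).
Lemma gam_spec k i : (k < n)%nat -> arcP k i (gam k i).
Proof. exact (proj2_sig (constructive_indefinite_description _ (gam_ex k i))). Qed.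

Fixpoint G (k : nat) : X -> Y :=
  match k with
  | O => fun _ => p 0%nat i0
  | S k' => fun x => match sel (S k') x with
             | Some i => gam k' i (tau (a (S k') i x))
             | None => G k' x end
  end.

Lemma G_S k x : G (S k) x = match sel (S k) x with
             | Some i => gam k i (tau (a (S k) i x))
             | None => G k x end.
Proof. reflexivity. Qed.

Lemma G_half m : (m <= n)%nat -> forall j x, a m j x > 1/2 -> G m x = p m j.
Proof.
  destruct m; intros Hm j x Hj.
  - simpl. destruct i0_spec as [Hu _]. rewrite (Hu j). reflexivity.
  - rewrite G_S. assert (Hs : sel (S m) x = Some j) by (apply sel_spec; auto; lra).
    rewrite Hs. replace (tau (a (S m) j x)) with 1.
    + destruct (a_pos_par m j x ltac:(lra)) as [j'' [Hp _]].
      destruct (gam_spec m j ltac:(lia) j'' Hp) as [_ [_ [H1 _]]]. exact H1.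
    + pose proof (a_range (S m) Hm j x). unfold tau, Rmin; destruct Rle_dec; lra.
Qed.

Lemma tau_range t : 0 <= t <= 1 -> 0 <= tau t <= 1.
Proof. unfold tau, Rmin; destruct Rle_dec; lra. Qed.

Lemma step m : (1 <= m)%nat -> (m < n)%nat -> forall x, d (G m x) (G (S m) x) < 1 / 2 ^ (m + 2)%nat.
Proof.
  intros H1 H2 x. assert (Hpos : 0 < 1 / 2 ^ (m + 2)%nat).
  { apply Rdiv_lt_0_compat; [lra|]. apply pow_lt; lra. }
  rewrite G_S. destruct (sel (S m) x) as [i|] eqn:E.
  - apply sel_spec in E; [|lia].
    destruct (a_pos_par m i x E) as [j [Hp Hj]].
    rewrite (G_half m ltac:(lia) j x Hj).
    destruct (gam_spec m i H2 j Hp) as [_ [H0 [_ Hd]]].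
    destruct (Hd H1) as [r' [Hr Hdd]]. rewrite <- H0.
    pose proof (tau_range _ (a_range (S m) ltac:(lia) i x)).
    specialize (Hdd 0 (tau (a (S m) i x)) ltac:(lra) H). lra.
  - destruct Hmet as [_ [Hz _]]. rewrite (proj2 (Hz _ _) eq_refl). auto.
Qed.

Lemma pow_half k : 1 / 2 ^ (S k) = (1 / 2 ^ k) / 2.
Proof. simpl. field. apply pow_nonzero. lra. Qed.

Lemma tele k m : (1 <= k)%nat -> (k <= m)%nat -> (m <= n)%nat -> forall x,
  d (G k x) (G m x) <= 1 / 2 ^ (k + 1)%nat - 1 / 2 ^ (m + 1)%nat.
Proof.
  intros Hk Hkm Hmn x. induction m.
  - lia.
  - destruct (Nat.eq_dec k (S m)) as [E|E].
    + subst. destruct Hmet as [_ [Hz _]]. rewrite (proj2 (Hz _ _) eq_refl). lra.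
    + specialize (IHm ltac:(lia) ltac:(lia)).
      pose proof (step m ltac:(lia) ltac:(lia) x).
      destruct Hmet as [_ [_ [_ Ht]]]. specialize (Ht (G k x) (G m x) (G (S m) x)).
      replace (S m + 1)%nat with (S (m + 1)) by lia. rewrite pow_half.
      replace (m + 2)%nat with (S (m + 1)) in H by lia. rewrite pow_half in H. lra.
Qed.

Lemma d_refl y : d y y = 0.
Proof. destruct Hmet as [_ [Hz _]]. apply Hz; auto. Qed.
Lemma d_sym y z : d y z = d z y.
Proof. destruct Hmet as [_ [_ [Hs _]]]. auto. Qed.
Lemma d_tri y z w : d y w <= d y z + d z w.
Proof. destruct Hmet as [_ [_ [_ Ht]]]. auto. Qed.

Lemma G_cont m : (m <= n)%nat -> forall x, contY _ open _ d (G m) x.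
Proof.
  induction m; intros Hm x.
  - intros e He. exists (fun _ => True). destruct Htop as [Ht _]. split; auto. split; auto.
    intros. simpl. rewrite d_refl. lra.
  - intros e He. specialize (IHm ltac:(lia)).
    destruct (hh_spec (S m) Hm) as [_ [_ [_ Hd]]]. destruct (Hd x) as [U0 [O0 [X0 HU]]].
    destruct (classic (exists i, exists y, U0 y /\ hh (S m) i y < 1)) as [[i Hi]|Hno].
    + assert (Loc : forall y, U0 y -> (0 < a (S m) i y /\ G (S m) y = gam m i (tau (a (S m) i y)))
                                   \/ (a (S m) i y <= 0 /\ G (S m) y = G m y)).
      { intros y Uy. rewrite G_S. destruct (sel (S m) y) as [i'|] eqn:E.
        - apply sel_spec in E; auto. assert (i' = i).
          { apply HU; auto. exists y; split; auto. apply a_pos_h; auto. }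
          subst. left; auto.
        - right. split; auto. destruct (Rle_dec (a (S m) i y) 0); auto.
          assert (Hp : 0 < a (S m) i y) by lra. apply sel_spec in Hp; auto. congruence. }
      destruct (Rlt_dec 0 (a (S m) i x)) as [Hx|Hx].
      * destruct (a_pos_par m i x Hx) as [j [Hp _]].
        destruct (gam_spec m i ltac:(lia) j Hp) as [Hpath _].
        pose proof (tau_range _ (a_range (S m) Hm i x)) as Hr.
        destruct (Hpath _ Hr e He) as [del [Hdel Hs]].
        destruct (a_cont (S m) Hm i x (Rmin (a (S m) i x) (del / 2))) as [U1 [O1 [X1 P1]]].
        { unfold Rmin; destruct Rle_dec; lra. }
        exists (fun y => U0 y /\ U1 y). split; [apply open_inter; auto|]. split; auto.
        intros y [Y0 Y1]. specialize (P1 y Y1).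
        assert (Hm1 := Rmin_l (a (S m) i x) (del/2)). assert (Hm2 := Rmin_r (a (S m) i x) (del/2)).
        destruct (Loc x X0) as [[_ Ex]|[Hc _]]; [|lra].
        destruct (Loc y Y0) as [[_ Ey]|[Hc Ey]].
        2:{ exfalso. unfold Rabs in P1; destruct Rcase_abs in P1; lra. }
        rewrite Ex, Ey, d_sym. apply Hs.
        -- apply tau_range, a_range; auto.
        -- pose proof (tau_lip (a (S m) i y) (a (S m) i x)). lra.
      * assert (Hx0 : a (S m) i x = 0) by (pose proof (a_range (S m) Hm i x); lra).
        destruct (Loc x X0) as [[Hc _]|[_ Ex]]; [lra|]. rewrite Ex.
        destruct (par m i) as [j|] eqn:Hp.
        -- destruct (gam_spec m i ltac:(lia) j Hp) as [Hpath [H0 _]].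
           destruct (Hpath 0 ltac:(lra) (e/2) ltac:(lra)) as [del [Hdel Hs]].
           destruct (a_cont (S m) Hm i x (del / 2)) as [U1 [O1 [X1 P1]]]; [lra|].
           destruct (IHm x (e/2)) as [U2 [O2 [X2 P2]]]; [lra|].
           exists (fun y => U0 y /\ (U1 y /\ U2 y)). split; [repeat apply open_inter; auto|].
           split; auto. intros y [Y0 [Y1 Y2]]. specialize (P1 y Y1). specialize (P2 y Y2).
           destruct (Loc y Y0) as [[Hc Ey]|[Hc Ey]].
           ++ rewrite Ey. destruct (a_pos_par m i y Hc) as [j' [Hp' Hj']].
              rewrite Hp in Hp'. injection Hp'; intro; subst j'.
              rewrite (G_half m ltac:(lia) j y Hj') in P2. rewrite <- H0 in P2.
              pose proof (tau_range _ (a_range (S m) Hm i y)) as Hr.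
              assert (Ht : Rabs (tau (a (S m) i y) - 0) < del).
              { pose proof (tau_lip (a (S m) i y) (a (S m) i x)). rewrite Hx0 in *.
                unfold tau at 2 in H. replace (Rmin 1 (2 * 0)) with 0 in H
                  by (unfold Rmin; destruct Rle_dec; lra). lra. }
              specialize (Hs _ Hr Ht). rewrite d_sym in Hs.
              pose proof (d_tri (G m x) (gam m i 0) (gam m i (tau (a (S m) i y)))). lra.
           ++ rewrite Ey. lra.
        -- destruct (IHm x e He) as [U2 [O2 [X2 P2]]].
           exists (fun y => U0 y /\ U2 y). split; [apply open_inter; auto|]. split; auto.
           intros y [Y0 Y2]. destruct (Loc y Y0) as [[Hc Ey]|[Hc Ey]].
           ++ rewrite a_S, Hp in Hc. lra.
           ++ rewrite Ey; auto.
    + destruct (IHm x e He) as [U2 [O2 [X2 P2]]].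
      assert (Loc : forall y, U0 y -> G (S m) y = G m y).
      { intros y Uy. rewrite G_S. destruct (sel (S m) y) as [i'|] eqn:E; auto.
        apply sel_spec in E; auto. exfalso. apply Hno. exists i', y. split; auto. apply a_pos_h; auto. }
      exists (fun y => U0 y /\ U2 y). split; [apply open_inter; auto|]. split; auto.
      intros y [Y0 Y2]. rewrite (Loc x X0), (Loc y Y0). auto.
Qed.

Hypothesis HB : forall k, (k <= n)%nat -> forall i : I k,
      exists r, r < 1 / 2 ^ (k + 2)%nat /\ forall x, F k i x -> d (f x) (p k i) <= r.

Lemma main_est k : (1 <= k)%nat -> (k <= n)%nat ->
      forall x, (exists i : I k, F k i x) -> d (f x) (G n x) < 1 / 2 ^ k.
Proof.
  intros H1 H2 x [i Hi].
  destruct (HB k H2 i) as [r [Hr Hd]]. specialize (Hd x Hi).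
  pose proof (a_one k H2 i x Hi) as Ha.
  rewrite <- (G_half k H2 i x ltac:(lra)) in Hd.
  pose proof (tele k n H1 H2 (le_n n) x) as Tl.
  pose proof (d_tri (f x) (G k x) (G n x)) as Tr.
  assert (Pn : 0 < 1 / 2 ^ (n + 1)%nat) by (apply Rdiv_lt_0_compat; [lra|apply pow_lt; lra]).
  replace (k + 2)%nat with (S (S k)) in Hr by lia.
  replace (k + 1)%nat with (S k) in Tl by lia.
  rewrite !pow_half in Hr. rewrite pow_half in Tl.
  assert (Pk : 0 < 1 / 2 ^ k) by (apply Rdiv_lt_0_compat; [lra|apply pow_lt; lra]). lra.
Qed.
End Main.

Theorem mainTheorem5
  (X : Type) (open : (X -> Prop) -> Prop) (Htop : is_topology open)
  (Y : Type) (d : Y -> Y -> R) (Hmet : is_metric d)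
  (f : X -> Y) (n : nat) (Hn : (2 <= n)%nat)
  (I : nat -> Type) (F : forall k, I k -> X -> Prop) (p : forall k, I k -> Y)
  (Hdisc : forall k, (k <= n)%nat -> strictly_functionally_discrete open (F k))
  (HA : exists i0 : I 0%nat, (forall i, i = i0) /\ (forall x, F 0%nat i0 x))
  (HB : forall k, (k <= n)%nat -> forall i : I k,
      exists r, r < 1 / 2 ^ (k + 2)%nat /\ forall x, F k i x -> d (f x) (p k i) <= r)
  (HC : forall k, (k < n)%nat -> forall i : I (S k),
      exists j : I k, forall x, F (S k) i x -> F k j x)
  (HD : forall (i0 : I 0%nat) (i : I 1%nat), joined_by_arc d (p 0%nat i0) (p 1%nat i))
  (HE : forall k, (1 <= k)%nat -> (k <= n - 1)%nat ->
      forall (i : I (S k)) (j : I k), (forall x, F (S k) i x -> F k j x) ->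
      joined_by_small_arc d (p (S k) i) (p k j) (1 / 2 ^ (k + 2)%nat)) :
  exists g : X -> Y, continuous_top_metric open d g /\
    forall k, (1 <= k)%nat -> (k <= n)%nat ->
      forall x, (exists i : I k, F k i x) -> d (f x) (g x) < 1 / 2 ^ k.
Proof.
  exists (G X open Y d n I F p Hdisc HA HC HD HE n). split.
  - apply contY_cont; auto. intro x. apply G_cont; auto.
  - intros k H1 H2 x Hx. eapply main_est; eauto.
Qed.
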